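(* Let $\psi_0:\mathbb{R}\to\mathbb{R}$ be any càdlàg function with $\lim_{|x|\to\infty}x^{-2}\psi_0(x)=0$, and let $\mathbf{r},\mathbf{s},\mathbf{t}$ be as in the context. Then $\mathbf{s}=\mathbf{t}$.
   Context: Write $\bar\psi(y):=\psi_0(y)\vee\psi_0(y-)$. Define $\mathbf{t}:=\inf\{y\ge0: \bar\psi(y-x)-\bar\psi(y)\le\tfrac12x^2 \text{ and } \bar\psi(y+x)-\bar\psi(y)<\tfrac12x^2 \text{ for all } x>0\}$ (equivalently, the first $y\ge0$ with $a(y)=y$, where $a(x)$ is the largest maximizer of $z\mapsto\bar\psi(z)-\tfrac12(z-x)^2$); $\mathbf{r}:=\inf\{y\ge0: \bar\psi(y-x)-\bar\psi(y)\le\tfrac12x^2 \text{ for all } x>0\}$; $\mathbf{s}:=\inf\{y\ge\mathbf{r}: \bar\psi(y+x)-\bar\psi(y)<\tfrac12x^2 \text{ for all } x>0\}$. *)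

(* Defs.v *)
From Stdlib Require Import Reals.
Open Scope R_scope.

Definition right_continuous_at (f : R -> R) (y : R) : Prop :=
  forall eps, eps > 0 -> exists delta, delta > 0 /\
    forall z, y <= z < y + delta -> Rabs (f z - f y) < eps.

Definition is_left_limit (f : R -> R) (y l : R) : Prop :=
  forall eps, eps > 0 -> exists delta, delta > 0 /\
    forall z, y - delta < z < y -> Rabs (f z - l) < eps.

Definition subquadratic (f : R -> R) : Prop :=
  forall eps, eps > 0 -> exists M, forall x, Rabs x > M -> Rabs (f x / x ^ 2) < eps.

(* psibar y = psi0(y) \/ psi0(y-), given the left-limit function psim *)
Definition psibar (psi0 psim : R -> R) (y : R) : R := Rmax (psi0 y) (psim y).

Definition is_lower_bound (S : R -> Prop) (m : R) : Prop := forall y, S y -> m <= y.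
Definition is_glb (S : R -> Prop) (m : R) : Prop :=
  is_lower_bound S m /\ (forall b, is_lower_bound S b -> b <= m).

(* Infimum in (-oo, +oo]: None stands for +oo = inf of the empty set. *)
Definition is_inf (S : R -> Prop) (v : option R) : Prop :=
  match v with
  | None => forall y, ~ S y
  | Some m => (exists y, S y) /\ is_glb S m
  end.

Definition condL (pb : R -> R) (y : R) : Prop :=
  forall x, x > 0 -> pb (y - x) - pb y <= / 2 * x ^ 2.
Definition condR (pb : R -> R) (y : R) : Prop :=
  forall x, x > 0 -> pb (y + x) - pb y < / 2 * x ^ 2.

Definition set_t (pb : R -> R) (y : R) : Prop := 0 <= y /\ condL pb y /\ condR pb y.
Definition set_r (pb : R -> R) (y : R) : Prop := 0 <= y /\ condL pb y.
(* {y >= r : condR y}; empty when r = +oo *)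
Definition set_s (pb : R -> R) (r : option R) (y : R) : Prop :=
  match r with
  | None => False
  | Some r0 => r0 <= y /\ condR pb y
  end.

(* Main.v *)
Require Import Defs.
From Stdlib Require Import Reals Lra Psatz Classical List.
Open Scope R_scope.

Definition usc (g : R -> R) : Prop :=
  forall x eps, eps > 0 -> exists delta, delta > 0 /\
    forall z, Rabs (z - x) < delta -> g z <= g x + eps.

Lemma list_max (g : R -> R) (l : list R) : l <> nil ->
  exists x, In x l /\ forall y, In y l -> g y <= g x.
Proof.
  induction l as [|a l IH]; intros H; [congruence|].
  destruct l as [|b l'].
  - exists a; split; [left; auto|]. intros y [<-|[]]; lra.
  - destruct IH as [x [Hx Hm]]; [discriminate|].
    destruct (Rle_dec (g a) (g x)).
    + exists x; split; [right; auto|]. intros y [<-|Hy]; [lra|auto].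
    + exists a; split; [left; auto|]. intros y [<-|Hy]; [lra|].
      specialize (Hm y Hy); lra.
Qed.

Lemma usc_max (g : R -> R) a b : usc g -> a <= b ->
  exists m, a <= m <= b /\ forall z, a <= z <= b -> g z <= g m.
Proof.
  intros Hu Hab.
  apply NNPP; intro Hno.
  assert (Hbig : forall w, a <= w <= b -> exists z, a <= z <= b /\ g w < g z).
  { intros w Hw. apply NNPP; intro H2. apply Hno. exists w; split; auto.
    intros z Hz. apply Rnot_lt_le. intro H3. apply H2. exists z; auto. }
  set (fam := mkfamily (fun x => a <= x <= b)
                 (fun x w => a <= x <= b /\ g w < g x)
                 (fun x H => match H with ex_intro _ _ (conj h _) => h end)).
  assert (Hcov : covering_open_set (fun c => a <= c <= b) fam).
  { split.
    - intros w Hw. destruct (Hbig w Hw) as [z [Hz Hgz]]. exists z. simpl; auto.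
    - intros x w [Hx Hw]. simpl in *.
      destruct (Hu w ((g x - g w)/2)) as [d [Hd Hd2]]; [lra|].
      exists (mkposreal d Hd). intros v Hv. unfold disc in Hv; simpl in Hv.
      split; auto. specialize (Hd2 v Hv). lra. }
  destruct (compact_P3 a b fam Hcov) as [D [Hc [l Hl]]].
  assert (Hne : l <> nil).
  { intro E. destruct (Hc a) as [y [[Hy1 Hy2] HD]]; [lra|].
    assert (In y l) by (apply Hl; split; simpl; auto). rewrite E in H; auto. }
  destruct (list_max g l Hne) as [xk [Hxk Hm]].
  apply Hl in Hxk. destruct Hxk as [Hxk1 Hxk2]. simpl in Hxk1.
  destruct (Hc xk Hxk1) as [y [[Hy1 Hy2] HD]]. simpl in Hy1.
  assert (In y l) by (apply Hl; split; simpl; tauto).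
  specialize (Hm y H). lra.
Qed.

Lemma Rmax_le_gen a b c : a <= c -> b <= c -> Rmax a b <= c.
Proof. intros; apply Rmax_lub; auto. Qed.

Lemma pb_usc psi0 psim :
  (forall y, right_continuous_at psi0 y) ->
  (forall y, is_left_limit psi0 y (psim y)) ->
  usc (psibar psi0 psim).
Proof.
  intros Hrc Hll x eps He.
  destruct (Hrc x (eps/2)) as [d1 [Hd1 H1]]; [lra|].
  destruct (Hll x (eps/2)) as [d2 [Hd2 H2]]; [lra|].
  exists (Rmin d1 d2). split; [apply Rmin_pos; auto|].
  intros z Hz. unfold psibar.
  assert (Hmx1 := Rmax_l (psi0 x) (psim x)).
  assert (Hmx2 := Rmax_r (psi0 x) (psim x)).
  assert (Hm1 := Rmin_l d1 d2). assert (Hm2 := Rmin_r d1 d2).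
  apply Rabs_def2 in Hz. destruct Hz as [Hz1 Hz2].
  destruct (Rtotal_order z x) as [Hzx|[Hzx|Hzx]].
  - destruct (Hll z (eps/2)) as [d3 [Hd3 H3]]; [lra|].
    set (w := (Rmax (x-d2) (z-d3) + z)/2).
    assert (Hw1 := Rmax_l (x-d2) (z-d3)). assert (Hw2 := Rmax_r (x-d2) (z-d3)).
    assert (Hw3 : Rmax (x-d2) (z-d3) < z) by (apply Rmax_lub_lt; lra).
    assert (A := H2 z ltac:(lra)). assert (B := H3 w ltac:(unfold w; lra)).
    assert (C := H2 w ltac:(unfold w; lra)).
    apply Rabs_def2 in A, B, C.
    apply Rmax_le_gen; lra.
  - subst; lra.
  - destruct (Hll z (eps/2)) as [d3 [Hd3 H3]]; [lra|].
    set (w := (Rmax x (z-d3) + z)/2).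
    assert (Hw1 := Rmax_l x (z-d3)). assert (Hw2 := Rmax_r x (z-d3)).
    assert (Hw3 : Rmax x (z-d3) < z) by (apply Rmax_lub_lt; lra).
    assert (A := H1 z ltac:(lra)). assert (B := H3 w ltac:(unfold w; lra)).
    assert (C := H1 w ltac:(unfold w; lra)).
    apply Rabs_def2 in A, B, C.
    apply Rmax_le_gen; lra.
Qed.

Lemma Rabs_cases a : (Rabs a = a /\ 0 <= a) \/ (Rabs a = - a /\ a < 0).
Proof. unfold Rabs; destruct (Rcase_abs a); [right|left]; split; lra. Qed.

Lemma usc_quad (pb : R -> R) c : usc pb -> usc (fun w => pb w - /2 * (w - c)^2).
Proof.
  intros Hu x eps He.
  destruct (Hu x (eps/2)) as [d1 [Hd1 H1]]; [lra|].
  set (K := Rabs (x - c) + 1).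
  assert (HK : K > 0) by (unfold K; generalize (Rabs_pos (x-c)); lra).
  set (d := Rmin d1 (Rmin 1 (eps / (4*K)))).
  assert (Hm1 := Rmin_l d1 (Rmin 1 (eps/(4*K)))).
  assert (Hm2 := Rmin_r d1 (Rmin 1 (eps/(4*K)))).
  assert (Hm3 := Rmin_l 1 (eps/(4*K))). assert (Hm4 := Rmin_r 1 (eps/(4*K))).
  assert (Hq : eps / (4*K) * (4*K) = eps) by (field; lra).
  exists d. split.
  { unfold d; repeat apply Rmin_pos; try lra. apply Rdiv_lt_0_compat; lra. }
  intros z Hz. specialize (H1 z ltac:(unfold d in *; lra)).
  assert (Hdk : Rabs (z - x) * (4*K) <= eps).
  { rewrite <- Hq. apply Rmult_le_compat_r; [lra|]. unfold d in *; lra. }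
  assert (Hxc := Rabs_pos (x - c)).
  apply Rabs_def2 in Hz. unfold K in *.
  destruct (Rabs_cases (x-c)) as [[E E']|[E E']]; destruct (Rabs_cases (z-x)) as [[F F']|[F F']];
    rewrite E in *; rewrite F in *; nra.
Qed.

Lemma condL_closed pb c : usc pb ->
  (forall d, d > 0 -> exists x, Rabs (x - c) < d /\ condL pb x) -> condL pb c.
Proof.
  intros Hu Hap u hu.
  apply Rnot_lt_le; intro HA.
  set (e := pb (c - u) - pb c - /2 * u^2).
  assert (He : e > 0) by (unfold e; lra).
  destruct (Hu c (e/2)) as [d1 [Hd1 H1]]; [lra|].
  set (eta := Rmin d1 (Rmin (u/2) (e/(4*u+1)))).
  assert (Hm1 := Rmin_l d1 (Rmin (u/2) (e/(4*u+1)))).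
  assert (Hm2 := Rmin_r d1 (Rmin (u/2) (e/(4*u+1)))).
  assert (Hm3 := Rmin_l (u/2) (e/(4*u+1))). assert (Hm4 := Rmin_r (u/2) (e/(4*u+1))).
  assert (Hq : e / (4*u+1) * (4*u+1) = e) by (field; lra).
  destruct (Hap eta) as [x [Hx HL]].
  { unfold eta; repeat apply Rmin_pos; try lra. apply Rdiv_lt_0_compat; lra. }
  specialize (H1 x ltac:(unfold eta in *; lra)).
  assert (Hdk : Rabs (x - c) * (4*u+1) <= e).
  { rewrite <- Hq. apply Rmult_le_compat_r; [lra|]. unfold eta in *; lra. }
  assert (Hxu : Rabs (x - c) < u/2) by (unfold eta in *; lra).
  apply Rabs_def2 in Hx.
  specialize (HL (u + (x - c)) ltac:(apply Rabs_def2 in Hxu; lra)).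
  replace (x - (u + (x - c))) with (c - u) in HL by ring.
  unfold e in *.
  destruct (Rabs_cases (x-c)) as [[E E']|[E E']]; rewrite E in *; nra.
Qed.

Lemma exists_t pb r0 y : usc pb -> 0 <= r0 -> condL pb r0 -> r0 <= y -> condR pb y ->
  exists c, set_t pb c /\ c <= y.
Proof.
  intros Hu Hr0 HLr0 Hry HRy.
  set (S := fun x => r0 <= x <= y /\ condL pb x).
  destruct (completeness S) as [c [Hub Hlub]].
  { exists y. intros x [Hx _]; lra. }
  { exists r0. split; [lra|auto]. }
  assert (Hrc : r0 <= c) by (apply Hub; split; [lra|auto]).
  assert (Hcy : c <= y) by (apply Hlub; intros x [Hx _]; lra).
  assert (HLc : condL pb c).
  { apply condL_closed; auto. intros d Hd.
    apply NNPP; intro H.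
    assert (c - d >= c); [|lra].
    apply Rle_ge, Hlub. intros x Hx. apply Rnot_lt_le; intro H2.
    apply H. exists x. split; [|apply Hx].
    assert (x <= c) by (apply Hub; auto). apply Rabs_def1; lra. }
  destruct (Req_dec c y) as [E|Hne].
  { exists c; split; [|lra]. subst c. split; [lra|split; auto]. }
  exists c. split; [|lra]. split; [lra|split; auto].
  apply NNPP; intro HnR.
  assert (Hz : exists z, z > c /\ pb (z) - pb c >= /2 * (z - c)^2).
  { apply NNPP; intro H. apply HnR. intros u hu.
    apply Rnot_ge_lt. intro H2. apply H. exists (c + u). split; [lra|].
    replace (c + u - c) with u by ring. auto. }
  destruct Hz as [z [Hzc Hz]].
  set (g := fun w => pb w - /2 * (w - c)^2).
  destruct (usc_max g c y (usc_quad pb c Hu) Hcy) as [m [Hm Hmax]].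
  assert (Hgy : forall w, w > y -> g w < g y).
  { intros w Hw. specialize (HRy (w - y) ltac:(lra)).
    replace (y + (w - y)) with w in HRy by ring. unfold g. nra. }
  assert (Hgl : forall w, w < c -> g w <= g c).
  { intros w Hw. specialize (HLc (c - w) ltac:(lra)).
    replace (c - (c - w)) with w in HLc by ring. unfold g. nra. }
  assert (Hglob : forall w, g w <= g m).
  { intros w. destruct (Rlt_dec w c).
    - specialize (Hgl w r). specialize (Hmax c ltac:(lra)). lra.
    - destruct (Rle_dec w y).
      + apply Hmax; lra.
      + specialize (Hgy w ltac:(lra)). specialize (Hmax y ltac:(lra)). lra. }
  assert (Ha : exists a, c < a <= y /\ forall w, g w <= g a).
  { destruct (Req_dec m c) as [Emc|Emc].
    - exists z.
      assert (Hgz : g z >= g c) by (unfold g; replace (c - c) with 0 by ring; lra).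
      assert (z <= y).
      { apply Rnot_lt_le; intro Hzy. specialize (Hgy z Hzy).
        specialize (Hmax y ltac:(lra)). subst m. lra. }
      split; [lra|]. intros w. specialize (Hglob w). subst m. lra.
    - exists m. split; [lra|auto]. }
  destruct Ha as [a [Hca Hga]].
  assert (HLa : condL pb a).
  { intros u hu. specialize (Hga (a - u)). unfold g in Hga. nra. }
  assert (a <= c) by (apply Hub; split; [lra|auto]). lra.
Qed.

Theorem lemma5p2 (psi0 psim : R -> R)
  (Hrc : forall y, right_continuous_at psi0 y)
  (Hll : forall y, is_left_limit psi0 y (psim y))
  (Hgrowth : subquadratic psi0)
  (r s t : option R)
  (Hr : is_inf (set_r (psibar psi0 psim)) r)
  (Hs : is_inf (set_s (psibar psi0 psim) r) s)
  (Ht : is_inf (set_t (psibar psi0 psim)) t) :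
  s = t.
Proof.
  set (pb := psibar psi0 psim) in *.
  assert (Hu : usc pb) by (apply pb_usc; auto).
  assert (Hts : forall y, set_t pb y -> set_s pb r y).
  { intros y [Hy0 [HL HR]]. destruct r as [r0|].
    - simpl. split; auto. destruct Hr as [_ [Hlb _]]. apply Hlb. split; auto.
    - simpl in Hr. exact (Hr y (conj Hy0 HL)). }
  assert (Hst : forall y, set_s pb r y -> exists c, set_t pb c /\ c <= y).
  { intros y Hy. destruct r as [r0|]; [|destruct Hy].
    destruct Hy as [Hry HRy]. destruct Hr as [[x0 Hx0] [Hlb Hglb]].
    assert (H0 : 0 <= r0) by (apply Hglb; intros z [Hz _]; auto).
    apply (exists_t pb r0 y Hu H0); auto.
    apply condL_closed; auto. intros d Hd.
    apply NNPP; intro H.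
    assert (r0 + d <= r0); [|lra].
    apply Hglb. intros x Hx. apply Rnot_lt_le; intro H2.
    apply H. exists x. split; [|apply Hx].
    assert (r0 <= x) by (apply Hlb; auto). apply Rabs_def1; lra. }
  destruct s as [s0|]; destruct t as [t0|]; simpl in Hs, Ht.
  - destruct Hs as [[ys Hys] [Hslb Hsglb]]. destruct Ht as [[yt Hyt] [Htlb Htglb]].
    f_equal. apply Rle_antisym.
    + apply Htglb. intros y Hy. apply Hslb, Hts, Hy.
    + apply Hsglb. intros y Hy. destruct (Hst y Hy) as [c [Hc Hcy]].
      specialize (Htlb c Hc). lra.
  - destruct Hs as [[ys Hys] _]. destruct (Hst ys Hys) as [c [Hc _]].
    exfalso; exact (Ht c Hc).
  - destruct Ht as [[yt Hyt] _]. exfalso; exact (Hs yt (Hts yt Hyt)).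
  - reflexivity.
Qed.
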